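(* For a simple closed curve $C=\partial D$ in $\mathbb{R}^2$, equip the set of $\mathbb{R}^2$-valued vector fields on $C$ with the inner product $\langle X,X'\rangle_C=\frac{1}{\sigma(C)}\int_C\langle X,X'\rangle\,ds$. Let $\Psi(D)=\ln\big(\sigma(\partial D)/\lambda(D)^2\big)$. For any smooth family of simple closed curves $C_t$ with $\partial_t C(t,u)=X_t(u)$ for a smooth vector field $X$, one has $\frac{d}{dt}\Psi(D_t)=\big\langle X_t,\big(\rho-\tfrac{2\sigma(C_t)}{\lambda(D_t)}\big)\nu\big\rangle_{C_t}$; consequently the gradient of $\Psi$ at $C$ for this inner product is the vector field $\big(\rho-2\sigma(C)/\lambda(D)\big)\nu$, and the renormalized curvature flow equation $\partial_t C=(-\rho+2\sigma(C)/\lambda(D))\nu$ is the gradient descent flow of $\Psi$.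
   Context: For a simple closed $C^2$ curve $C$ bounding the domain $D$: $\lambda(D)$ is the area, $\sigma(C)$ the length, $ds$ arc length, $\nu$ the outward unit normal, $\rho$ the curvature. *)

(* Defs.v *)
From Stdlib Require Import Reals List.
From Coquelicot Require Import Coquelicot.
Open Scope R_scope.

(* A family of plane curves C(t,u) = (x t u, y t u); t is the time
   parameter, u the curve parameter (period 1). *)

Definition pt (f : R -> R -> R) : R -> R -> R :=
  fun t u => Derive (fun s => f s u) t.
Definition pu (f : R -> R -> R) : R -> R -> R :=
  fun t u => Derive (fun v => f t v) u.

Fixpoint iter_pd (l : list bool) (f : R -> R -> R) : R -> R -> R :=
  match l with
  | nil => f
  | b :: l' => if b then pt (iter_pd l' f) else pu (iter_pd l' f)
  end.

Definition smooth2 (f : R -> R -> R) : Prop :=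
  forall (l : list bool) (t u : R),
    ex_derive (fun s => iter_pd l f s u) t /\
    ex_derive (fun v => iter_pd l f t v) u /\
    continuous (fun p : R * R => iter_pd l f (fst p) (snd p)) (t, u).

Definition speed (x y : R -> R -> R) (t u : R) : R :=
  sqrt (pu x t u ^ 2 + pu y t u ^ 2).

Definition len_C (x y : R -> R -> R) (t : R) : R :=
  RInt (fun u => speed x y t u) 0 1.

(* signed area (Green's formula) *)
Definition signed_area (x y : R -> R -> R) (t : R) : R :=
  / 2 * RInt (fun u => x t u * pu y t u - y t u * pu x t u) 0 1.

Definition orient (x y : R -> R -> R) (t : R) : R :=
  if Rlt_dec 0 (signed_area x y t) then 1 else -1.

Definition lambda (x y : R -> R -> R) (t : R) : R :=
  Rabs (signed_area x y t).

(* outward unit normal nu = (nu1, nu2) *)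
Definition nu1 (x y : R -> R -> R) (t u : R) : R :=
  orient x y t * pu y t u / speed x y t u.
Definition nu2 (x y : R -> R -> R) (t u : R) : R :=
  - (orient x y t * pu x t u / speed x y t u).

(* curvature rho (positive for convex curves) *)
Definition curv (x y : R -> R -> R) (t u : R) : R :=
  orient x y t *
  (pu x t u * pu (pu y) t u - pu y t u * pu (pu x) t u) / speed x y t u ^ 3.

Definition inner_C (x y : R -> R -> R) (t : R)
  (X1 X2 V1 V2 : R -> R) : R :=
  / len_C x y t * RInt (fun u => (X1 u * V1 u + X2 u * V2 u) * speed x y t u) 0 1.

Definition Psi (x y : R -> R -> R) (t : R) : R :=
  ln (len_C x y t / lambda x y t ^ 2).

Definition smooth_simple_closed_family (x y : R -> R -> R) : Prop :=
  smooth2 x /\ smooth2 y /\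
  (forall t u, x t (u + 1) = x t u /\ y t (u + 1) = y t u) /\
  (forall t u1 u2, 0 <= u1 < 1 -> 0 <= u2 < 1 ->
     x t u1 = x t u2 -> y t u1 = y t u2 -> u1 = u2) /\
  (forall t u, pu x t u <> 0 \/ pu y t u <> 0).

(* Main.v *)
Require Import Defs.
From Stdlib Require Import Reals Lra Nsatz List.
From Coquelicot Require Import Coquelicot.
Open Scope R_scope.

Definition C2 (f : R -> R -> R) := forall t u, continuity_2d_pt f t u.

Lemma iter_pd_pu l f : iter_pd l (pu f) = iter_pd (l ++ false :: nil) f.
Proof. induction l as [|[] l IH]; simpl; rewrite ?IH; reflexivity. Qed.
Lemma iter_pd_pt l f : iter_pd l (pt f) = iter_pd (l ++ true :: nil) f.
Proof. induction l as [|[] l IH]; simpl; rewrite ?IH; reflexivity. Qed.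
Lemma smooth2_pu f : smooth2 f -> smooth2 (pu f).
Proof. intros H l t u. rewrite iter_pd_pu. apply H. Qed.
Lemma smooth2_pt f : smooth2 f -> smooth2 (pt f).
Proof. intros H l t u. rewrite iter_pd_pt. apply H. Qed.
Lemma smooth2_C2 f : smooth2 f -> C2 f.
Proof. intros H t u. apply continuity_2d_pt_filterlim. exact (proj2 (proj2 (H nil t u))). Qed.
Lemma smooth2_dt f t u : smooth2 f -> is_derive (fun s => f s u) t (pt f t u).
Proof. intros H. apply Derive_correct. exact (proj1 (H nil t u)). Qed.
Lemma smooth2_du f t u : smooth2 f -> is_derive (fun v => f t v) u (pu f t u).
Proof. intros H. apply Derive_correct. exact (proj1 (proj2 (H nil t u))). Qed.

Lemma loc2_all (P : R -> R -> Prop) x y : (forall u v, P u v) -> locally_2d P x y.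
Proof. intros H. exists (mkposreal 1 Rlt_0_1). intros; apply H. Qed.

Lemma schwarz f t u : smooth2 f -> pt (pu f) t u = pu (pt f) t u.
Proof.
  intros H. unfold pt, pu.
  apply (Schwarz f t u).
  - apply loc2_all. intros z v. repeat split.
    + exact (proj1 (H nil z v)).
    + exact (proj1 (proj2 (H nil z v))).
    + exact (proj1 (smooth2_pu f H nil z v)).
    + exact (proj1 (proj2 (smooth2_pt f H nil z v))).
  - apply (smooth2_C2 (pt (pu f))). apply smooth2_pt, smooth2_pu, H.
  - apply (smooth2_C2 (pu (pt f))). apply smooth2_pu, smooth2_pt, H.
Qed.

Lemma C2_plus f g : C2 f -> C2 g -> C2 (fun t u => f t u + g t u).
Proof. intros Hf Hg t u; apply continuity_2d_pt_plus; auto. Qed.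
Lemma C2_minus f g : C2 f -> C2 g -> C2 (fun t u => f t u - g t u).
Proof. intros Hf Hg t u; apply continuity_2d_pt_minus; auto. Qed.
Lemma C2_mult f g : C2 f -> C2 g -> C2 (fun t u => f t u * g t u).
Proof. intros Hf Hg t u; apply continuity_2d_pt_mult; auto. Qed.
Lemma C2_const c : C2 (fun _ _ => c).
Proof. intros t u; apply continuity_2d_pt_const. Qed.
Lemma C2_inv f : C2 f -> (forall t u, f t u <> 0) -> C2 (fun t u => / f t u).
Proof. intros Hf Hn t u; apply continuity_2d_pt_inv; auto. Qed.
Lemma C2_div f g : C2 f -> C2 g -> (forall t u, g t u <> 0) -> C2 (fun t u => f t u / g t u).
Proof. intros Hf Hg Hn. unfold Rdiv. apply C2_mult; auto. apply C2_inv; auto. Qed.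
Lemma C2_pow f n : C2 f -> C2 (fun t u => f t u ^ n).
Proof. intros Hf; induction n; simpl. apply C2_const. apply C2_mult; auto. Qed.
Lemma C2_sqrt f : C2 f -> (forall t u, 0 <= f t u) -> C2 (fun t u => sqrt (f t u)).
Proof. intros Hf Hn t u. apply continuity_1d_2d_pt_comp; auto. apply continuity_pt_sqrt; auto. Qed.

Lemma C2_cont_u f t u : C2 f -> continuous (fun v => f t v) u.
Proof.
  intros H. apply (continuous_comp_2 (fun _ => t) (fun v => v) f).
  apply continuous_const. apply continuous_id.
  apply continuity_2d_pt_filterlim. apply H.
Qed.
Lemma C2_RInt f t : C2 f -> ex_RInt (fun v => f t v) 0 1.
Proof. intros H. apply (ex_RInt_continuous (V:=R_CompleteNormedModule)). intros; apply C2_cont_u, H. Qed.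

Lemma Derive_per g u : (forall v, g (v + 1) = g v) -> Derive g (u + 1) = Derive g u.
Proof.
  intros H. unfold Derive. apply f_equal. apply Lim_ext. intros h.
  rewrite H. replace (u + 1 + h) with ((u + h) + 1) by ring. rewrite H. reflexivity.
Qed.

Lemma RInt_plus_deriv (f g G : R -> R) :
  (forall u, continuous f u) -> (forall u, is_derive G u (g u)) ->
  (forall u, continuous g u) -> G 1 = G 0 ->
  RInt (fun u => f u + g u) 0 1 = RInt f 0 1.
Proof.
  intros Hf HG Hg Hper.
  assert (E : RInt g 0 1 = 0).
  { assert (HI : is_RInt g 0 1 (minus (G 1) (G 0))).
    { apply (is_RInt_derive (V:=R_CompleteNormedModule)); auto. }
    apply (is_RInt_unique (V:=R_CompleteNormedModule)) in HI. rewrite HI, Hper.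
    unfold minus, plus, opp; simpl. ring. }
  change (RInt (fun u => plus (f u) (g u)) 0 1 = RInt f 0 1).
  rewrite (RInt_plus (V:=R_CompleteNormedModule)). rewrite E. unfold plus; simpl. ring.
  apply (ex_RInt_continuous (V:=R_CompleteNormedModule)); auto. apply (ex_RInt_continuous (V:=R_CompleteNormedModule)); auto.
Qed.

Lemma gen_sqrt (fa fb : R -> R) t da db :
  is_derive fa t da -> is_derive fb t db -> 0 < fa t ^ 2 + fb t ^ 2 ->
  is_derive (fun z => sqrt (fa z ^ 2 + fb z ^ 2)) t
    ((fa t * da + fb t * db) / sqrt (fa t ^ 2 + fb t ^ 2)).
Proof.
  intros Ha Hb Hp.
  assert (Hq : is_derive (fun z => fa z ^ 2 + fb z ^ 2) t
     (plus (INR 2 * da * fa t ^ Init.Nat.pred 2) (INR 2 * db * fb t ^ Init.Nat.pred 2))).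
  { apply (is_derive_plus (fun z => fa z ^ 2) (fun z => fb z ^ 2)); apply is_derive_pow; eauto. }
  pose proof (is_derive_sqrt _ _ _ Hq Hp) as Hp'. clear Hq.
  eapply is_derive_ext; [intros; reflexivity|].
  replace ((fa t * da + fb t * db) / sqrt (fa t ^ 2 + fb t ^ 2)) with
     (plus (INR 2 * da * fa t ^ Init.Nat.pred 2) (INR 2 * db * fb t ^ Init.Nat.pred 2) / (2 * sqrt (fa t ^ 2 + fb t ^ 2))).
  exact Hp'.
  unfold plus; simpl. field. apply Rgt_not_eq. apply sqrt_lt_R0. simpl in *; lra.
Qed.

Lemma gen_prod2 (f1 g1 f2 g2 : R -> R) t d1 e1 d2 e2 :
  is_derive f1 t d1 -> is_derive g1 t e1 -> is_derive f2 t d2 -> is_derive g2 t e2 ->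
  is_derive (fun z => f1 z * g1 z - f2 z * g2 z) t
     (d1 * g1 t + f1 t * e1 - (d2 * g2 t + f2 t * e2)).
Proof.
  intros H1 H2 H3 H4.
  apply (is_derive_minus (fun z => f1 z * g1 z) (fun z => f2 z * g2 z));
  apply (is_derive_mult (K:=R_AbsRing)); auto; intros; apply Rmult_comm.
Qed.

Lemma gen_G (a b p q : R -> R) u da db dp dq :
  is_derive a u da -> is_derive b u db -> is_derive p u dp -> is_derive q u dq ->
  0 < a u ^ 2 + b u ^ 2 ->
  is_derive (fun v => (a v * p v + b v * q v) / sqrt (a v ^ 2 + b v ^ 2)) u
   ((a u * dp + b u * dq) / sqrt (a u ^ 2 + b u ^ 2)
    - (a u * db - b u * da) / sqrt (a u ^ 2 + b u ^ 2) ^ 3 * (p u * b u - q u * a u)).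
Proof.
  intros Ha Hb Hp Hq Hpos.
  assert (HS := gen_sqrt a b u da db Ha Hb Hpos).
  assert (HN : is_derive (fun v => a v * p v + b v * q v) u (da * p u + a u * dp + (db * q u + b u * dq))).
  { apply (is_derive_plus (fun v => a v * p v) (fun v => b v * q v));
    apply (is_derive_mult (K:=R_AbsRing)); auto; intros; apply Rmult_comm. }
  assert (Hs0 : 0 < sqrt (a u ^ 2 + b u ^ 2)) by (apply sqrt_lt_R0; auto).
  assert (HD := is_derive_div _ _ u _ _ HN HS (Rgt_not_eq _ _ Hs0)).
  eapply is_derive_ext; [intros; reflexivity|].
  match goal with |- is_derive _ _ ?l => replace l with
   (((da * p u + a u * dp + (db * q u + b u * dq)) * sqrt (a u ^ 2 + b u ^ 2) -
     (a u * p u + b u * q u) * ((a u * da + b u * db) / sqrt (a u ^ 2 + b u ^ 2))) /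
      sqrt (a u ^ 2 + b u ^ 2) ^ 2) end.
  exact HD.
  assert (Hss : sqrt (a u ^ 2 + b u ^ 2) * sqrt (a u ^ 2 + b u ^ 2) = a u ^ 2 + b u ^ 2)
    by (apply sqrt_sqrt; lra).
  set (S := sqrt (a u ^ 2 + b u ^ 2)) in *.
  set (A := a u) in *. set (B := b u) in *. set (P := p u) in *. set (Q := q u) in *.
  assert (S <> 0) by lra.
  field_simplify; auto.
  f_equal. clear -Hss. clearbody S A B P Q. assert (E2 : S ^ 2 = A ^ 2 + B ^ 2) by (rewrite <- Hss; ring). rewrite E2. ring.
Qed.

Definition DL x y z u := (pu x z u * pu (pt x) z u + pu y z u * pu (pt y) z u) / speed x y z u.
Definition Lint x y z u := (pu x z u * pu (pu y) z u - pu y z u * pu (pu x) z u) / speed x y z u ^ 3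
   * (pt x z u * pu y z u - pt y z u * pu x z u).
Definition Wf x y z u := pt x z u * pu y z u - pt y z u * pu x z u.

Lemma per_pu f : (forall z u, f z (u + 1) = f z u) -> forall z u, pu f z (u + 1) = pu f z u.
Proof. intros H z u. unfold pu. apply Derive_per. intros; apply H. Qed.
Lemma per_pt f : (forall z u, f z (u + 1) = f z u) -> forall z u, pt f z (u + 1) = pt f z u.
Proof. intros H z u. unfold pt. apply Derive_ext. intros; apply H. Qed.

Section Main.
Variables x y : R -> R -> R.
Hypothesis sx : smooth2 x.
Hypothesis sy : smooth2 y.
Hypothesis perx : forall z u, x z (u + 1) = x z u.
Hypothesis pery : forall z u, y z (u + 1) = y z u.
Hypothesis reg : forall z u, pu x z u <> 0 \/ pu y z u <> 0.

Lemma pos2 z u : 0 < pu x z u ^ 2 + pu y z u ^ 2.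
Proof.
  assert (Ha := Rle_0_sqr (pu x z u)). assert (Hb := Rle_0_sqr (pu y z u)).
  unfold Rsqr in *. simpl.
  destruct (reg z u) as [H|H].
  - assert (Hc := Rsqr_pos_lt _ H). unfold Rsqr in Hc. lra.
  - assert (Hc := Rsqr_pos_lt _ H). unfold Rsqr in Hc. lra.
Qed.

Lemma spd_pos z u : 0 < speed x y z u.
Proof. unfold speed. apply sqrt_lt_R0, pos2. Qed.

Lemma spd_nz z u : speed x y z u <> 0.
Proof. apply Rgt_not_eq, spd_pos. Qed.

Lemma C2_x : C2 x. Proof. apply smooth2_C2; auto. Qed.
Lemma C2_y : C2 y. Proof. apply smooth2_C2; auto. Qed.
Lemma C2_px : C2 (pt x). Proof. apply smooth2_C2, smooth2_pt; auto. Qed.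
Lemma C2_py : C2 (pt y). Proof. apply smooth2_C2, smooth2_pt; auto. Qed.
Lemma C2_ax : C2 (pu x). Proof. apply smooth2_C2, smooth2_pu; auto. Qed.
Lemma C2_ay : C2 (pu y). Proof. apply smooth2_C2, smooth2_pu; auto. Qed.
Lemma C2_aax : C2 (pu (pu x)). Proof. apply smooth2_C2, smooth2_pu, smooth2_pu; auto. Qed.
Lemma C2_aay : C2 (pu (pu y)). Proof. apply smooth2_C2, smooth2_pu, smooth2_pu; auto. Qed.
Lemma C2_apx : C2 (pu (pt x)). Proof. apply smooth2_C2, smooth2_pu, smooth2_pt; auto. Qed.
Lemma C2_apy : C2 (pu (pt y)). Proof. apply smooth2_C2, smooth2_pu, smooth2_pt; auto. Qed.

Ltac c2 := lazymatch goal with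
  | |- C2 (fun t u => @?A t u + @?B t u) => apply (C2_plus A B); c2
  | |- C2 (fun t u => @?A t u - @?B t u) => apply (C2_minus A B); c2
  | |- C2 (fun t u => @?A t u * @?B t u) => apply (C2_mult A B); c2
  | |- C2 (fun t u => @?A t u / @?B t u) => apply (C2_div A B); [c2 | c2 |
        intros; first [apply spd_nz | apply pow_nonzero, spd_nz]]
  | |- C2 (fun t u => @?A t u ^ ?n) => apply (C2_pow A n); c2
  | |- C2 (fun t u => sqrt (@?A t u)) => apply (C2_sqrt A); [c2 | intros; apply Rlt_le, pos2]
  | |- C2 (fun _ _ => ?c) => apply C2_const
  | _ => first [exact C2_x | exact C2_y | exact C2_px | exact C2_py | exact C2_ax | exact C2_ay
  | exact C2_aax | exact C2_aay | exact C2_apx | exact C2_apy ]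
  end.

Lemma C2_speed : C2 (speed x y).
Proof.
  unfold speed. c2.
Qed.

Lemma C2_DL : C2 (DL x y).
Proof. unfold DL, speed. c2. Qed.

Lemma C2_Lint : C2 (Lint x y).
Proof.
  unfold Lint, speed. c2.
Qed.

Lemma C2_W : C2 (Wf x y).
Proof. unfold Wf. c2. Qed.

Lemma dspeed t u : is_derive (fun z => speed x y z u) t (DL x y t u).
Proof.
  assert (H := gen_sqrt (fun z => pu x z u) (fun z => pu y z u) t _ _
     (smooth2_dt _ t u (smooth2_pu _ sx)) (smooth2_dt _ t u (smooth2_pu _ sy)) (pos2 t u)).
  rewrite (schwarz x t u sx), (schwarz y t u sy) in H. exact H.
Qed.

Lemma dlen t : is_derive (len_C x y) t (RInt (fun u => Lint x y t u) 0 1).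
Proof.
  assert (HP := is_derive_RInt_param (fun z u => speed x y z u) 0 1 t).
  replace (RInt (fun u => Lint x y t u) 0 1) with (RInt (fun u => Derive (fun w => speed x y w u) t) 0 1).
  apply HP.
  - apply filter_forall. intros z u _. eexists; apply dspeed.
  - intros u _. apply continuity_2d_pt_ext with (f := DL x y).
    intros; symmetry; apply is_derive_unique, dspeed. apply C2_DL.
  - apply filter_forall. intros z. apply (C2_RInt (speed x y)), C2_speed.
  - transitivity (RInt (fun u => Lint x y t u + (DL x y t u - Lint x y t u)) 0 1).
    + apply RInt_ext. intros u _. assert (E := is_derive_unique _ _ _ (dspeed t u)).
      change (Derive (fun w : R => speed x y w u) t = DL x y t u) in E. rewrite E.
      change (DL x y t u = Lint x y t u + (DL x y t u - Lint x y t u)). ring.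
    + pose (G := fun v => (pu x t v * pt x t v + pu y t v * pt y t v) / sqrt (pu x t v ^ 2 + pu y t v ^ 2)).
      apply (RInt_plus_deriv (fun u => Lint x y t u) (fun u => DL x y t u - Lint x y t u) G).
      * intros; apply C2_cont_u, C2_Lint.
      * intros u. unfold DL, Lint, speed, G.
        apply gen_G; try apply smooth2_du; auto using smooth2_pu, smooth2_pt. apply pos2.
      * intros; apply (C2_cont_u (fun z v => DL x y z v - Lint x y z v)). apply C2_minus. apply C2_DL. apply C2_Lint.
      * assert (HG : forall v, G (v + 1) = G v) by (intro v; unfold G;
          rewrite (per_pu x perx), (per_pu y pery), (per_pt x perx), (per_pt y pery); reflexivity).
        specialize (HG 0). rewrite Rplus_0_l in HG. exact HG.
Qed.

Definition DA z u := pt x z u * pu y z u + x z u * pu (pt y) z u - (pt y z u * pu x z u + y z u * pu (pt x) z u).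

Lemma dAint t u : is_derive (fun z => x z u * pu y z u - y z u * pu x z u) t (DA t u).
Proof.
  assert (H := gen_prod2 (fun z => x z u) (fun z => pu y z u) (fun z => y z u) (fun z => pu x z u) t _ _ _ _
   (smooth2_dt _ t u sx) (smooth2_dt _ t u (smooth2_pu _ sy)) (smooth2_dt _ t u sy) (smooth2_dt _ t u (smooth2_pu _ sx))).
  rewrite (schwarz x t u sx), (schwarz y t u sy) in H. exact H.
Qed.

Lemma C2_DA : C2 DA.
Proof. unfold DA; c2. Qed.

Lemma darea t : is_derive (signed_area x y) t (RInt (fun u => Wf x y t u) 0 1).
Proof.
  unfold signed_area.
  replace (RInt (fun u => Wf x y t u) 0 1) with (/2 * RInt (fun u => Derive (fun w => x w u * pu y w u - y w u * pu x w u) t) 0 1).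
  apply is_derive_scal.
  apply (is_derive_RInt_param (fun z u => x z u * pu y z u - y z u * pu x z u) 0 1 t).
  - apply filter_forall; intros z u _; eexists; apply dAint.
  - intros u _. apply continuity_2d_pt_ext with (f := DA). intros; symmetry; apply is_derive_unique, dAint. apply C2_DA.
  - apply filter_forall; intros z. apply (C2_RInt (fun z u => x z u * pu y z u - y z u * pu x z u)). c2.
  - transitivity (/2 * RInt (fun u => 2 * Wf x y t u + (DA t u - 2 * Wf x y t u)) 0 1).
    + f_equal. apply RInt_ext. intros u _. assert (E := is_derive_unique _ _ _ (dAint t u)).
      change (Derive (fun w : R => x w u * pu y w u - y w u * pu x w u) t = DA t u) in E. rewrite E.
      change (DA t u = 2 * Wf x y t u + (DA t u - 2 * Wf x y t u)). ring.
    + pose (G := fun v => x t v * pt y t v - y t v * pt x t v).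
      rewrite (RInt_plus_deriv (fun u => 2 * Wf x y t u) (fun u => DA t u - 2 * Wf x y t u) G).
      * assert (HexW : ex_RInt (fun u => Wf x y t u) 0 1) by (apply (C2_RInt (Wf x y)), C2_W).
        assert (E : RInt (fun u => 2 * Wf x y t u) 0 1 = 2 * RInt (fun u => Wf x y t u) 0 1)
          by (exact (RInt_scal (V:=R_CompleteNormedModule) (fun u => Wf x y t u) 0 1 2 HexW)).
        rewrite E. field.
      * intros; apply (C2_cont_u (fun z v => 2 * Wf x y z v)). apply C2_mult. apply C2_const. apply C2_W.
      * intros u.
        replace (DA t u - 2 * Wf x y t u) with (pu x t u * pt y t u + x t u * pu (pt y) t u - (pu y t u * pt x t u + y t u * pu (pt x) t u)) by (unfold DA, Wf; ring).
        apply gen_prod2; apply smooth2_du; auto using smooth2_pt.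
      * intros; apply (C2_cont_u (fun z v => DA z v - 2 * Wf x y z v)). apply C2_minus. apply C2_DA. apply C2_mult. apply C2_const. apply C2_W.
      * assert (HG : forall v, G (v + 1) = G v) by (intro v; unfold G; rewrite perx, pery, (per_pt x perx), (per_pt y pery); reflexivity).
        specialize (HG 0). rewrite Rplus_0_l in HG. exact HG.
Qed.

End Main.

Lemma RInt_lin (f g : R -> R) k : ex_RInt f 0 1 -> ex_RInt g 0 1 ->
  RInt (fun u => f u - k * g u) 0 1 = RInt f 0 1 - k * RInt g 0 1.
Proof.
  intros Hf Hg.
  change (fun u => f u - k * g u) with (fun u => minus (f u) (scal k (g u))).
  rewrite (RInt_minus (V:=R_CompleteNormedModule)).
  rewrite (RInt_scal (V:=R_CompleteNormedModule)). reflexivity. exact Hg. exact Hf.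
  apply (ex_RInt_scal (V:=R_CompleteNormedModule)). exact Hg.
Qed.

Theorem lemma2p5 (x y : R -> R -> R)
  (Hfam : smooth_simple_closed_family x y)
  (Harea : forall t, 0 < lambda x y t) (t : R) :
  is_derive (fun s => Psi x y s) t
    (inner_C x y t (pt x t) (pt y t)
       (fun u => (curv x y t u - 2 * len_C x y t / lambda x y t) * nu1 x y t u)
       (fun u => (curv x y t u - 2 * len_C x y t / lambda x y t) * nu2 x y t u)).
Proof.
  destruct Hfam as (sx & sy & Hper & _ & reg).
  assert (perx : forall z u, x z (u + 1) = x z u) by (intros; apply Hper).
  assert (pery : forall z u, y z (u + 1) = y z u) by (intros; apply Hper).
  assert (HL := dlen x y sx sy perx pery reg t).
  assert (HS := darea x y sx sy perx pery t).
  assert (Lpos : 0 < len_C x y t).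
  { unfold len_C. apply RInt_gt_0. lra. intros; apply spd_pos; auto.
    intros; apply C2_cont_u, C2_speed; auto. }
  assert (Sne : signed_area x y t <> 0).
  { intro E. specialize (Harea t). unfold lambda in Harea. rewrite E, Rabs_R0 in Harea. lra. }
  assert (Sq : 0 < signed_area x y t ^ 2).
  { assert (H := Rsqr_pos_lt _ Sne). unfold Rsqr in H. simpl. lra. }
  assert (posq : 0 < len_C x y t / signed_area x y t ^ 2) by (apply Rdiv_lt_0_compat; auto).
  pose proof (is_derive_div _ _ t _ _ HL (is_derive_pow _ 2 t _ HS) (pow_nonzero _ 2 Sne)) as Hq.
  pose proof (is_derive_comp ln _ t _ _ (is_derive_ln _ posq) Hq) as Hc.
  apply is_derive_ext with (f := fun s => ln (len_C x y s / signed_area x y s ^ 2)).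
  { intros s. unfold Psi, lambda. rewrite pow2_abs. reflexivity. }
  match type of Hc with is_derive _ _ ?v =>
    match goal with |- is_derive _ _ ?w => replace w with v; [exact Hc|] end end.
  unfold inner_C.
  assert (Hnz : lambda x y t <> 0) by (apply Rgt_not_eq, Harea).
  rewrite (RInt_ext (fun u => (pt x t u * ((curv x y t u - 2 * len_C x y t / lambda x y t) * nu1 x y t u) +
      pt y t u * ((curv x y t u - 2 * len_C x y t / lambda x y t) * nu2 x y t u)) * speed x y t u) (fun u => Lint x y t u - (2 * len_C x y t / lambda x y t * orient x y t) * Wf x y t u)).
  2:{ intros u _. assert (Hs := spd_nz x y reg t u).
      match goal with |- ?a = ?b => change (@eq R a b) end.
      unfold curv, nu1, nu2, Lint, Wf. unfold orient.
      destruct (Rlt_dec 0 (signed_area x y t)); field; auto. }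
  rewrite RInt_lin.
  2:{ apply (C2_RInt (Lint x y)). apply C2_Lint; auto. }
  2:{ apply (C2_RInt (Wf x y)). apply C2_W; auto. }
  unfold scal; simpl; unfold mult; simpl.
  change (RInt (Lint x y t) 0 1) with (RInt (fun u => Lint x y t u) 0 1).
  change (RInt (Wf x y t) 0 1) with (RInt (fun u => Wf x y t u) 0 1).
  unfold lambda, orient in *.
  destruct (Rlt_dec 0 (signed_area x y t)) as [Hp|Hn].
  - rewrite Rabs_right by lra. field. split; auto; lra.
  - rewrite Rabs_left by lra. field. split; auto; lra.
Qed.
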